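(* Let $q\ge1$ be an integer and let $\mathbf{d}$ be a $(q+1)$-graphical sequence of length $n$ with $\sum_{v\in V}d_v=(q+1)m$ and $\Delta(\mathbf{d})=\Delta$. Assume $\left((q+1)^2+\Delta^{1/q}\right)\Delta\le\frac18 m$. Then for any $K\in\binom{V}{q+1}$, $$P_K(\mathbf{d})\le\frac{2\,q!\,D_K(\mathbf{d})}{(m(q+1))^q},\qquad\text{where } D_K(\mathbf{d})=\prod_{v\in K}d_v.$$
   Context: $V=[n]$. A sequence is $(q+1)$-graphical if it is the degree sequence of some $(q+1)$-uniform hypergraph on $V$ (a set of $(q+1)$-element subsets of $V$). $\Delta(\mathbf{d})=\max_v d_v$. For $K\in\binom V{q+1}$, $P_K(\mathbf{d})$ is the probability that a uniformly random $(q+1)$-uniform hypergraph on $V$ with degree sequence $\mathbf{d}$ contains the edge $K$. *)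

(* Defs.v *)
From HB Require Import structures.
From mathcomp Require Import all_boot all_order all_algebra.
From mathcomp Require Import all_classical all_reals all_analysis.
Set Implicit Arguments. Unset Strict Implicit. Unset Printing Implicit Defensive.
Import Order.TTheory GRing.Theory Num.Theory.

Definition uniform_hg (n k : nat) (H : {set {set 'I_n}}) : bool :=
  [forall e in H, #|e| == k].

Definition hdeg (n : nat) (H : {set {set 'I_n}}) (v : 'I_n) : nat :=
  #|[set e in H | v \in e]|.

Definition realizes (n k : nat) (d : 'I_n -> nat) (H : {set {set 'I_n}}) : bool :=
  uniform_hg k H && [forall v, hdeg H v == d v].

Definition graphical (n k : nat) (d : 'I_n -> nat) : Prop :=
  exists H : {set {set 'I_n}}, realizes k d H.

Definition maxdeg (n : nat) (d : 'I_n -> nat) : nat := \max_(v : 'I_n) d v.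

Definition PK (R : realType) (n k : nat) (d : 'I_n -> nat) (K : {set 'I_n}) : R :=
  (#|[set H : {set {set 'I_n}} | realizes k d H && (K \in H)]|%:R /
   #|[set H : {set {set 'I_n}} | realizes k d H]|%:R)%R.

Definition DK (n : nat) (d : 'I_n -> nat) (K : {set 'I_n}) : nat :=
  \prod_(v in K) d v.

(* Main.v *)
Require Import Defs.
From HB Require Import structures.
From mathcomp Require Import all_boot all_order.
From mathcomp Require Import zify ring.
Set Implicit Arguments. Unset Strict Implicit. Unset Printing Implicit Defensive.

Definition imf {I : finType} {n : nat} (f : I -> 'I_n) : {set 'I_n} := [set f i | i : I].

Lemma imfP (I : finType) n (f : I -> 'I_n) x : reflect (exists i, x = f i) (x \in imf f).
Proof. by apply: (iffP imsetP) => [[i _ ->]|[i ->]]; exists i. Qed.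

Lemma imf_f (I : finType) n (f : I -> 'I_n) i : f i \in imf f.
Proof. by apply/imfP; exists i. Qed.

Lemma card_imf (I : finType) n (f : I -> 'I_n) : injective f -> #|imf f| = #|I|.
Proof. by move=> fi; rewrite /imf card_imset // cardsT. Qed.

Lemma imf_ind (I : finType) n (f : I -> 'I_n) x : injective f ->
  (x \in imf f : nat) = \sum_i (f i == x : nat).
Proof.
move=> fi; case: (boolP (x \in imf f)) => [/imfP[i ->]|nx].
  rewrite (bigD1 i) //= eqxx big1 // => j ji.
  by case: eqP => // /fi E; rewrite E eqxx in ji.
rewrite big1 // => i _; case: eqP => // E.
by case/negP: nx; rewrite -E imf_f.
Qed.

Lemma card_fam (I T : finType) (F : I -> {set T}) :
  #|[set w : {ffun I -> T} | [forall i, w i \in F i]]| = \prod_i #|F i|.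
Proof.
have -> : #|[set w : {ffun I -> T} | [forall i, w i \in F i]]| =
          #|(family (fun i => mem (F i)) : simpl_pred {ffun I -> T})|.
  by apply: eq_card => w; rewrite inE; apply/forallP/familyP.
rewrite (@card_family I (fun _ => T)) foldrE big_map big_enum /=.
by apply: eq_bigr.
Qed.

Lemma card_sep_sumT (T : finType) (A : {pred T}) (P : pred T) :
  #|[set t in A | P t]| = \sum_t ((t \in A) && P t : nat).
Proof.
rewrite -sum1dep_card big_mkcond /=; apply: eq_bigr => t _.
by case: (t \in A); case: (P t).
Qed.

Lemma card_exists_le (I T : finType) (P : I -> T -> bool) (A : {pred T}) :
  #|[set t in A | [exists x, P x t]]| <= \sum_x #|[set t in A | P x t]|.
Proof.
rewrite card_sep_sumT.
rewrite (eq_bigr (fun x => \sum_t ((t \in A) && P x t : nat))); last first.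
  by move=> x _; rewrite card_sep_sumT.
rewrite exchange_big /=.
apply: leq_sum => t _.
case: (boolP (t \in A)) => //= tA; case: (boolP [exists x, P x t]) => // /existsP[x Px].
by rewrite (bigD1 x) //= ?tA ?Px.
Qed.

Lemma card_pairs (A B : finType) (P : A -> B -> bool) :
  #|[set p : A * B | P p.1 p.2]| = \sum_a #|[set b | P a b]|.
Proof.
rewrite -sum1dep_card -(pair_big_dep xpredT (fun a b => P a b) (fun _ _ => 1)) /=.
by apply: eq_bigr => a _; rewrite sum1dep_card.
Qed.

Lemma card_sep_sum (T : finType) (H : {set T}) (P : pred T) :
  #|[set e in H | P e]| = \sum_(e in H) (P e : nat).
Proof.
rewrite -sum1_card big_mkcond /= [RHS]big_mkcond /=; apply: eq_bigr => e _.
by rewrite inE; case: (e \in H); case: (P e).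
Qed.


Definition unif (n k : nat) (H : {set {set 'I_n}}) := forall e, e \in H -> #|e| = k.

Definition Cset (n q : nat) (H : {set {set 'I_n}}) (x : 'I_n) : {set {ffun 'I_q -> 'I_n}} :=
  [set c : {ffun 'I_q -> 'I_n} | injectiveb c && (x \notin imf c) && (x |: imf c \in H)].

Lemma card_Cset n q H x : unif q.+1 H ->
  #|@Cset n q H x| <= #|[set e in H | x \in e]| * q`!.
Proof.
move=> uH.
have sub : Cset q H x \subset
   [set c : {ffun 'I_q -> 'I_n} in predT | [exists g, (g \in H) && (x \in g) &&
         ((c \in ffun_on (mem (g :\ x))) && injectiveb c)]].
  apply/subsetP => c; rewrite !inE => /andP[/andP[ic nx] cH].
  apply/existsP; exists (x |: imf c); rewrite cH setU11 ic /= andbT.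
  apply/ffun_onP => k; rewrite !inE imf_f ?andbT.
  rewrite orbT andbT; apply: contraNneq nx => <-; exact: imf_f.
apply: (leq_trans (subset_leq_card sub)); apply: (leq_trans (card_exists_le _ _)).
rewrite card_sep_sumT big_distrl /=; apply: leq_sum => g _.
case: (boolP ((g \in H) && (x \in g))) => [/andP[gH xg]|ng]; last first.
  rewrite mul0n leqn0 cards_eq0; apply/eqP/setP => c; rewrite !inE.
  by move: ng; case: (g \in H); case: (x \in g).
rewrite mul1n (eq_card (B := [set c : {ffun 'I_q -> 'I_n} in ffun_on (mem (g :\ x)) | injectiveb c])); last first.
  by move=> c; rewrite !inE ?gH ?xg.
rewrite card_inj_ffuns_on card_ord.
have : #|g| = (x \in g) + #|g :\ x| by rewrite (cardsD1 x).
by rewrite uH // xg add1n => -[<-]; rewrite ffactnn.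
Qed.

Definition Oset (n q : nat) (H : {set {set 'I_n}}) : {set {ffun 'I_q.+1 -> 'I_n}} :=
  [set f : {ffun 'I_q.+1 -> 'I_n} | injectiveb f && (imf f \in H)].

Lemma card_Oset_pos n q H (i : 'I_q.+1) y :
  #|[set f in @Oset n q H | f i == y]| <= #|@Cset n q H y|.
Proof.
pose r (f : {ffun 'I_q.+1 -> 'I_n}) : {ffun 'I_q -> 'I_n} := [ffun k : 'I_q => f (lift i k)].
have rinj : {in [set f in Oset q H | f i == y] &, injective r}.
  move=> f g; rewrite !inE => /andP[_ /eqP fi] /andP[_ /eqP gi] E.
  apply/ffunP => j; case: (unliftP i j) => [k ->|->].
    by have := congr1 (fun h : {ffun 'I_q -> 'I_n} => h k) E; rewrite !ffunE.
  by rewrite fi gi.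
rewrite -(card_in_imset rinj); apply: subset_leq_card; apply/subsetP => c /imsetP[f].
rewrite !inE => /andP[/andP[/injectiveP fI fH] /eqP fi] ->.
have ny : y \notin imf (r f).
  apply/imfP => -[k]; rewrite ffunE -fi => /fI /eqP; rewrite (negbTE (neq_lift _ _)) //.
have E : y |: imf (r f) = imf f.
  apply/setP => z; rewrite !inE; apply/orP/imfP.
    case=> [/eqP ->|/imfP[k ->]]; first by exists i.
    by exists (lift i k); rewrite ffunE.
  case=> j ->; case: (unliftP i j) => [k ->|->]; last by rewrite fi; left.
  by right; apply/imfP; exists k; rewrite ffunE.
rewrite ny E fH !andbT; apply/injectiveP => k1 k2; rewrite !ffunE => /fI; exact: lift_inj.
Qed.

Lemma card_Oset_ge n q H : unif q.+1 H -> #|H| * q.+1`! <= #|@Oset n q H|.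
Proof.
move=> uH.
rewrite -[#|Oset _ _|]sum1_card (partition_big (fun f : {ffun 'I_q.+1 -> 'I_n} => imf f) (fun e => e \in H)) /=; last first.
  by move=> f; rewrite inE => /andP[].
rewrite -sum_nat_const; apply: leq_sum => e eH.
have -> : q.+1`! = #|[set f : {ffun 'I_q.+1 -> 'I_n} in ffun_on (mem e) | injectiveb f]|.
  by rewrite card_inj_ffuns_on card_ord uH // ffactnn.
rewrite sum1dep_card.
apply: subset_leq_card; apply/subsetP => f; rewrite !inE => /andP[/ffun_onP fe fI].
have E : imf f = e.
  apply/eqP; rewrite eqEcard card_imf; last exact/injectiveP.
  rewrite card_ord uH // leqnn andbT; apply/subsetP => z /imfP[i ->]; exact: fe.
by rewrite fI E eH eqxx.
Qed.

Lemma sum_Oset_pos n q H (i : 'I_q.+1) :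
  \sum_y #|[set f in @Oset n q H | f i == y]| = #|Oset q H|.
Proof.
rewrite -sum1_card (partition_big (fun f : {ffun 'I_q.+1 -> 'I_n} => f i) xpredT) //=.
by apply: eq_bigr => y _; rewrite sum1dep_card.
Qed.


Lemma sum_le_const (I : finType) (F : I -> nat) c : (forall i, F i <= c) ->
  \sum_i F i <= #|I| * c.
Proof. by move=> h; rewrite -sum_nat_const; apply: leq_sum => i _; apply: h. Qed.

Section Switch.
Variables (n q : nat) (hq : 0 < q) (v : 'I_q.+1 -> 'I_n) (vinj : injective v).

Notation T := {ffun 'I_q.+1 -> 'I_n}.
Notation W := {ffun 'I_q -> T}.

Definition Kset := imf v.
Definition col (w : W) (i : 'I_q.+1) : {ffun 'I_q -> 'I_n} := [ffun j => w j i].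
Definition ed (w : W) i := v i |: imf (col w i).
Definition Rem (w : W) := Kset |: [set imf (w j) | j : 'I_q].
Definition Add (w : W) := [set ed w i | i : 'I_q.+1].
Definition sw (H : {set {set 'I_n}}) (w : W) := (H :\: Rem w) :|: Add w.

Definition B1 (w : W) := [exists j, exists a, w j a \in Kset].
Definition B2 (w : W) := [exists j, exists l, exists a, exists b,
  (j != l) && ((a == b) || (a == ord0)) && (w j a == w l b)].
Definition B3 (H : {set {set 'I_n}}) (w : W) := [exists i, injectiveb (col w i) && (v i \notin imf (col w i)) && (ed w i \in H)].
Definition Wset (H : {set {set 'I_n}}) := [set w : W | [forall j, w j \in Oset q H]].
Definition valid (H : {set {set 'I_n}}) := [set w in Wset H | ~~ B1 w && ~~ B2 w && ~~ B3 H w].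

Section Props.
Variables (H : {set {set 'I_n}}) (KH : Kset \in H) (w : W) (wv : w \in valid H).

Lemma P1 j : injective (w j) /\ imf (w j) \in H.
Proof.
move: wv; rewrite !inE => /andP[/forallP/(_ j)]; rewrite inE => /andP[/injectiveP ? ?] _.
by split.
Qed.

Lemma P2 j a : w j a \notin Kset.
Proof.
move: wv; rewrite !inE => /andP[_ /andP[/andP[nb1 _] _]].
by apply: contra nb1 => Ka; apply/existsP; exists j; apply/existsP; exists a.
Qed.

Lemma nB2 j l a b : j != l -> (a == b) || (a == ord0) -> w j a != w l b.
Proof.
move: wv; rewrite !inE => /andP[_ /andP[/andP[_ nb2] _]] jl ab.
apply: contra nb2 => E; apply/existsP; exists j; apply/existsP; exists l;
apply/existsP; exists a; apply/existsP; exists b; by rewrite jl ab E.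
Qed.

Lemma P3 i : injective (col w i).
Proof.
move=> j l; rewrite !ffunE => E; case: (eqVneq j l) => // jl.
by move: (nB2 (a:=i) (b:=i) jl); rewrite eqxx E eqxx => /(_ isT).
Qed.

Lemma P4 j l : j != l -> imf (w j) != imf (w l).
Proof.
move=> jl; apply/eqP => E.
have : w j ord0 \in imf (w l) by rewrite -E imf_f.
case/imfP => b Eb; move: (nB2 (a := ord0) (b := b) jl); rewrite eqxx orbT Eb eqxx.
by move/(_ isT).
Qed.

Lemma colK i : v i \notin imf (col w i).
Proof.
by apply/imfP => -[j]; rewrite ffunE => E; move: (P2 j i); rewrite -E /Kset imf_f.
Qed.

Lemma P5 i : ed w i \notin H.
Proof.
move: wv; rewrite !inE => /andP[_ /andP[_ nb3]].
apply: contra nb3 => eH; apply/existsP; exists i.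
by rewrite eH colK !andbT; apply/injectiveP; apply: P3.
Qed.

Lemma edinj : injective (ed w).
Proof.
move=> i k E; have : v i \in ed w k by rewrite -E /ed setU11.
rewrite /ed !inE => /orP[/eqP/vinj //|/imfP[j]]; rewrite ffunE => Ej.
by move: (P2 j k); rewrite -Ej /Kset imf_f.
Qed.

Lemma rowsK j : imf (w j) != Kset.
Proof.
apply/eqP => E; move: (P2 j ord0); by rewrite -E imf_f.
Qed.

Lemma RemH : Rem w \subset H.
Proof.
apply/subsetP => e; rewrite !inE => /orP[/eqP -> //|/imsetP[j _ ->]].
by case: (P1 j).
Qed.

Lemma AddH : [disjoint H & Add w].
Proof.
rewrite -setI_eq0; apply/eqP/setP => e; rewrite !inE; apply/negbTE.
apply/negP => /andP[eH /imsetP[i _ Ee]]; by move: (P5 i); rewrite -Ee eH.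
Qed.

Lemma sw_inv : H = (sw H w :\: Add w) :|: Rem w.
Proof.
have := AddH; rewrite disjoint_sym => /disjointFr dis.
apply/setP => e; rewrite /sw in_setU in_setD in_setU in_setD.
case: (boolP (e \in Rem w)) => eR; rewrite ?orbT.
  by move/subsetP: RemH => /(_ e eR).
rewrite orbF /=; case: (boolP (e \in H)) => eH /=.
  by case: (boolP (e \in Add w)) => // /dis; rewrite eH.
by case: (e \in Add w).
Qed.

Lemma card_ed i : #|ed w i| = q.+1.
Proof. by rewrite /ed cardsU1 colK card_imf ?card_ord //; apply: P3. Qed.

Lemma K_notin_sw : Kset \notin sw H w.
Proof.
rewrite /sw in_setU in_setD /Rem setU11 /=; apply/imsetP => -[i _ E].
have j0 : 'I_q := Ordinal hq.
have : w j0 i \in Kset by rewrite E /ed !inE; apply/orP; right; rewrite (_ : w j0 i = col w i j0) ?imf_f // ffunE.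
by rewrite (negbTE (P2 _ _)).
Qed.

Lemma deg_sum x : \sum_(e in sw H w) (x \in e : nat) = \sum_(e in H) (x \in e : nat).
Proof.
rewrite /sw (eq_bigl [predU (H :\: Rem w) & Add w]); last by move=> e; rewrite in_setU.
rewrite bigU /=; last first.
  rewrite -setI_eq0; apply/eqP/setP => e; rewrite !inE; apply/negbTE.
  apply/negP => /andP[/andP[_ eH] eA]; move: AddH; rewrite -setI_eq0 => /eqP/setP/(_ e).
  by rewrite !inE eH eA.
rewrite [in RHS](big_setID (Rem w)) /= (setIidPr RemH) addnC; congr (_ + _).
rewrite /Add big_imset /=; last by move=> i k _ _; apply: edinj.
rewrite /Rem big_setU1 /=; last first.
  apply/imsetP => -[j _ E]; by move: (rowsK j); rewrite -E eqxx.
rewrite big_imset /=; last first.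
  move=> j l _ _ E; case: (eqVneq j l) => // jl; by move: (P4 jl); rewrite E eqxx.
have e1 i : (x \in ed w i : nat) = (v i == x : nat) + (x \in imf (col w i) : nat).
  rewrite /ed !inE; case: (boolP (x == v i)) => [/eqP ->|nx]; last by rewrite eq_sym (negbTE nx).
  by rewrite eqxx (negbTE (colK i)).
rewrite (eq_bigr _ (fun i _ => e1 i)) big_split /=.
rewrite /Kset (imf_ind _ vinj); congr (_ + _).
rewrite (eq_bigr (fun i => \sum_j (w j i == x : nat))); last first.
  move=> i _; rewrite (imf_ind _ (P3 (i:=i))); apply: eq_bigr => j _; by rewrite ffunE.
rewrite exchange_big /=; apply: eq_bigr => j _.
by rewrite (imf_ind _ (proj1 (P1 j))).
Qed.

Lemma sw_unif : unif q.+1 H -> unif q.+1 (sw H w).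
Proof.
move=> uH e; rewrite /sw in_setU in_setD => /orP[/andP[_ /uH //]|/imsetP[i _ ->]].
exact: card_ed.
Qed.

Lemma sw_deg x : #|[set e in sw H w | x \in e]| = #|[set e in H | x \in e]|.
Proof. by rewrite !card_sep_sum deg_sum. Qed.

Lemma col_Cset i : col w i \in Cset q (sw H w) (v i).
Proof.
rewrite inE colK andbT; apply/andP; split; first by apply/injectiveP; apply: P3.
by rewrite /sw in_setU; apply/orP; right; apply/imsetP; exists i.
Qed.

End Props.

Lemma sum_delta k (a : 'I_k) : \sum_(b : 'I_k) (a == b : nat) = 1.
Proof. by rewrite (bigD1 a) //= eqxx big1 // => b; rewrite eq_sym => /negbTE ->. Qed.

Lemma prod_one (g : 'I_q -> nat) j c : (forall k, k != j -> g k = c) ->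
  \prod_k g k = g j * c ^ q.-1.
Proof.
move=> hg; rewrite (bigD1 j) //=; congr (_ * _).
rewrite (eq_bigr (fun _ => c)); last by move=> k; apply: hg.
by rewrite prod_nat_const cardC1 card_ord.
Qed.

Lemma prod_two (g : 'I_q -> nat) j l c : j != l -> (forall k, k != j -> k != l -> g k = c) ->
  \prod_k g k = g j * g l * c ^ q.-2.
Proof.
move=> jl hg; rewrite (bigD1 j) //= (bigD1 l) /=; last by rewrite eq_sym.
rewrite mulnA; congr (_ * _).
rewrite (eq_bigr (fun _ => c)); last by move=> k /andP[kj kl]; apply: hg.
rewrite prod_nat_const.
have : #|predC1 j| = (l \in predC1 j) + #|[predD1 predC1 j & l]| by apply: cardD1.
rewrite cardC1 card_ord inE eq_sym jl add1n => E.
congr (_ ^ _); rewrite -[q.-2]/(q.-1.-1) E /=; apply: eq_card => k; by rewrite !inE andbC.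
Qed.

Section Count.
Variables (H : {set {set 'I_n}}) (uH : unif q.+1 H) (D : nat)
  (hD : forall y, #|[set e in H | y \in e]| <= D).
Let O := Oset q H.
Let N := #|O|.

Lemma OposD a y : #|[set f in O | f a == y]| <= D * q`!.
Proof.
apply: leq_trans (card_Oset_pos _ _ _) _; apply: leq_trans (card_Cset _ uH) _.
by rewrite leq_mul2r hD orbT.
Qed.

Lemma card_Wfam (G : 'I_q -> {set T}) :
  #|[set w in Wset H | [forall k, w k \in G k]]| = \prod_k #|O :&: G k|.
Proof.
rewrite -card_fam; apply: eq_card => w; rewrite !inE.
apply/andP/forallP => [[/forallP h1 /forallP h2] k|h]; first by rewrite inE h1 h2.
by split; apply/forallP => k; move: (h k); rewrite inE => /andP[].
Qed.


Lemma OmK a : #|[set f in O | f a \in Kset]| <= q.+1 * (D * q`!).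
Proof.
have sub : [set f in O | f a \in Kset] \subset [set f in O | [exists i, f a == v i]].
  apply/subsetP => f; rewrite !inE => /andP[-> /imfP[i ->]] /=.
  by apply/existsP; exists i.
apply: leq_trans (subset_leq_card sub) _; apply: leq_trans (card_exists_le _ _) _.
by apply: leq_trans (sum_le_const (fun i => OposD a (v i))) _; rewrite card_ord.
Qed.

Lemma B1_bound : #|[set w in Wset H | B1 w]| <= q * (q.+1 * (q.+1 * (D * q`!) * N ^ q.-1)).
Proof.
apply: leq_trans (card_exists_le _ _) _.
rewrite -[X in X * _](card_ord q); apply: sum_le_const => j.
apply: leq_trans (card_exists_le _ _) _.
rewrite -[X in X * _](card_ord q.+1); apply: sum_le_const => a.
pose G := fun k : 'I_q => if k == j then [set f : T | f a \in Kset] else setT.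
have -> : #|[set w in Wset H | w j a \in Kset]| = #|[set w in Wset H | [forall k, w k \in G k]]|.
  apply: eq_card => w; rewrite !inE; congr (_ && _); apply/idP/forallP => [h k|/(_ j)].
    by rewrite /G; case: eqP => [->|_]; rewrite inE.
  by rewrite /G eqxx inE.
rewrite card_Wfam (prod_one (j := j) (c := N)); last by move=> k /negbTE kj; rewrite /G kj setIT.
rewrite leq_mul2r; apply/orP; right; rewrite /G eqxx.
apply: leq_trans (OmK a); apply: subset_leq_card; apply/subsetP => f; by rewrite !inE.
Qed.


Lemma pair_bound j l a b : j != l ->
  #|[set w in Wset H | w j a == w l b]| <= D * q`! * N ^ q.-1.
Proof.
move=> jl.
have q2 : 1 < q.
  move: (ltn_ord j) (ltn_ord l) jl; rewrite -val_eqE /=.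
  case: (nat_of_ord j) => [|[|jj]]; case: (nat_of_ord l) => [|[|ll]] //; lia.
pose G := fun (y : 'I_n) (k : 'I_q) =>
  if k == j then [set f : T | f a == y] else if k == l then [set f : T | f b == y] else setT.
have sub : [set w in Wset H | w j a == w l b] \subset
           [set w in Wset H | [exists y, [forall k, w k \in G y k]]].
  apply/subsetP => w; rewrite !inE => /andP[-> /eqP E] /=; apply/existsP; exists (w l b).
  apply/forallP => k; rewrite /G; case: eqP => [->|_]; first by rewrite inE E.
  by case: eqP => [->|_]; rewrite inE.
apply: leq_trans (subset_leq_card sub) _; apply: leq_trans (card_exists_le _ _) _.
have E y : #|[set w in Wset H | [forall k, w k \in G y k]]| =
           #|[set f in O | f a == y]| * #|[set f in O | f b == y]| * N ^ q.-2.
  rewrite card_Wfam (prod_two (j := j) (l := l) (c := N)) //; last first.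
    by move=> k /negbTE kj /negbTE kl; rewrite /G kj kl setIT.
  rewrite /G eqxx eq_sym (negbTE jl) eqxx; congr (_ * _ * _); apply: eq_card => f; by rewrite !inE.
rewrite (eq_bigr _ (fun y _ => E y)).
have h y : #|[set f in O | f a == y]| * #|[set f in O | f b == y]| * N ^ q.-2 <=
    D * q`! * #|[set f in O | f b == y]| * N ^ q.-2.
  by rewrite leq_mul2r leq_mul2r OposD !orbT.
apply: leq_trans; first by apply: leq_sum => y _; exact: (h y).
rewrite -big_distrl -big_distrr /= sum_Oset_pos -/O -/N -mulnA -expnS.
by rewrite (_ : (q.-2).+1 = q.-1) //; lia.
Qed.

Lemma B2_bound : #|[set w in Wset H | B2 w]| <= q * (q * (2 * q.+1 * (D * q`! * N ^ q.-1))).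
Proof.
set X := D * q`! * N ^ q.-1.
apply: leq_trans (card_exists_le _ _) _.
rewrite -[X in X * _](card_ord q); apply: sum_le_const => j.
apply: leq_trans (card_exists_le _ _) _.
rewrite -[X in X * _](card_ord q); apply: sum_le_const => l.
apply: leq_trans (card_exists_le _ _) _.
apply: leq_trans; first by apply: leq_sum => a _; apply: card_exists_le.
have Eb a b : #|[set w in Wset H | (j != l) && ((a == b) || (a == ord0)) && (w j a == w l b)]|
     <= ((a == b) + (a == ord0)) * X.
  case: (boolP ((j != l) && ((a == b) || (a == ord0)))) => [/andP[jl ab]|nc].
    rewrite (eq_card (B := [set w in Wset H | w j a == w l b])); last by move=> w; rewrite !inE.
    apply: leq_trans (pair_bound _ _ jl) _; rewrite /X leq_pmull //.
    by move: ab; case: (a == b); case: (a == ord0).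
  rewrite (eq_card (B := set0)); first by rewrite cards0.
  by move=> w; rewrite !inE ?andbF.
apply: leq_trans; first by apply: leq_sum => a _; apply: leq_sum => b _; apply: Eb.
rewrite (eq_bigr (fun a => ((1 + q.+1 * (a == ord0)) * X))); last first.
  move=> a _; rewrite -big_distrl /= big_split /= sum_delta sum_nat_const card_ord.
  by case: (a == ord0).
rewrite -big_distrl /= big_split /= sum_nat_const card_ord muln1 -big_distrr /=.
rewrite (eq_bigr (fun a => (ord0 == a : nat))); last by move=> a _; rewrite eq_sym.
by rewrite sum_delta muln1 mul2n -addnn.
Qed.


Lemma B3_bound : #|[set w in Wset H | B3 H w]| <= q.+1 * (D * q`!) ^ q.+1.
Proof.
apply: leq_trans (card_exists_le _ _) _.
rewrite -[X in X * _](card_ord q.+1); apply: sum_le_const => i.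
have sub : [set w in Wset H | injectiveb (col w i) && (v i \notin imf (col w i)) && (ed w i \in H)]
  \subset [set w in Wset H | [exists c, (c \in Cset q H (v i)) &&
                 [forall k, w k \in [set f : T | f i == c k]]]].
  apply/subsetP => w; rewrite !inE => /andP[-> h] /=; apply/existsP; exists (col w i).
  rewrite inE h /=; apply/forallP => k; by rewrite !inE ffunE.
apply: leq_trans (subset_leq_card sub) _; apply: leq_trans (card_exists_le _ _) _.
have Ec c : #|[set w in Wset H | (c \in Cset q H (v i)) &&
                 [forall k, w k \in [set f : T | f i == c k]]]| <= (c \in Cset q H (v i)) * (D * q`!) ^ q.
  case: (boolP (c \in Cset q H (v i))) => cC; last first.
    rewrite (eq_card (B := set0)); first by rewrite cards0.
    by move=> w; rewrite !inE ?andbF.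
  rewrite mul1n (eq_card (B := [set w in Wset H | [forall k, w k \in [set f : T | f i == c k]]])); last first.
    by move=> w; rewrite !inE.
  rewrite card_Wfam -[X in _ ^ X](card_ord q) -prod_nat_const; apply: leq_prod => k _.
  apply: leq_trans (OposD i (c k)); apply: subset_leq_card; apply/subsetP => f; by rewrite !inE.
apply: leq_trans; first by apply: leq_sum => c _; apply: (Ec c).
rewrite /= -big_distrl /= expnS leq_mul2r; apply/orP; right.
apply: (@leq_trans #|Cset q H (v i)|).
  by rewrite -sum1_card [X in _ <= X]big_mkcond /=; apply: leq_sum => c _; case: (c \in _).
apply: leq_trans (card_Cset _ uH) _; by rewrite leq_mul2r hD orbT.
Qed.


Lemma card_Wset : #|Wset H| = N ^ q.
Proof.
have := card_Wfam (fun _ => setT).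
rewrite (eq_card (B := Wset H)); last first.
  move=> w; rewrite !inE; case: [forall j, w j \in Oset q H] => //=.
  by apply/forallP => k; rewrite inE.
move=> ->; rewrite (eq_bigr (fun _ => N)); last by move=> k _; rewrite setIT.
by rewrite prod_nat_const card_ord.
Qed.

Lemma valid_ge : 8 * q * q.+1 * q.+1 * (D * q`!) <= N -> 8 * (q.+1 * (D * q`!) ^ q.+1) <= N ^ q ->
  N ^ q <= 2 * #|valid H|.
Proof.
move=> hN1 hN2.
have cU (A B : {set W}) : #|A :|: B| <= #|A| + #|B| by rewrite cardsU leq_subr.
have sub : Wset H \subset valid H :|: ([set w in Wset H | B1 w] :|: [set w in Wset H | B2 w]
                                       :|: [set w in Wset H | B3 H w]).
  apply/subsetP => w wW; rewrite !in_setU !inE.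
  move: wW; rewrite inE => ->; by case: (B1 w); case: (B2 w); case: (B3 H w).
have h := subset_leq_card sub.
have b1 := B1_bound; have b2 := B2_bound; have b3 := B3_bound.
have := leq_trans h (cU _ _); move: (cU [set w in Wset H | B1 w] [set w in Wset H | B2 w]).
move: (cU ([set w in Wset H | B1 w] :|: [set w in Wset H | B2 w]) [set w in Wset H | B3 H w]).
rewrite card_Wset.
set X1 := #|[set w in Wset H | B1 w]|; set X2 := #|[set w in Wset H | B2 w]|.
set X3 := #|[set w in Wset H | B3 H w]|; set V := #|valid H|.
set Y := #|_ :|: _|; set Z := #|_ :|: _|.
move: b1 b2 b3 hN1 hN2; rewrite -/X1 -/X2 -/X3 -/N.
have -> : N ^ q = N * N ^ q.-1 by rewrite -expnS prednK.
set a := N ^ q.-1; set DP := D * q`!.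
move=> b1 b2 b3 hN1 hN2 hZ hY hV.
have e1 : 8 * (X1 + X2) <= 3 * (N * a).
  apply: (@leq_trans (3 * (8 * q * q.+1 * q.+1 * DP) * a)); last by rewrite -mulnA leq_mul2l leq_mul2r hN1 !orbT.
  nia.
nia.
Qed.

End Count.
End Switch.


Lemma fact_le q : q.+1`! <= q.+1 ^ q.
Proof.
elim: q => // q IH; rewrite factS expnS leq_mul2l; apply/orP; right.
apply: leq_trans IH _; case: q => // q; rewrite leq_exp2r //.
Qed.

Section Main.
Variables (n q m : nat) (hq : 0 < q) (v : 'I_q.+1 -> 'I_n) (vinj : injective v)
  (d : 'I_n -> nat) (hsum : \sum_x d x = q.+1 * m)
  (hD1 : 8 * q.+1 ^ 2 * maxdeg d <= m) (hD2 : 8 ^ q * maxdeg d ^ q.+1 <= m ^ q).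

Section R.
Variables (H : {set {set 'I_n}}) (rH : realizes q.+1 d H).

Lemma real_unif : unif q.+1 H.
Proof. by move: rH => /andP[/forall_inP h _] e /h /eqP. Qed.

Lemma real_deg x : #|[set e in H | x \in e]| = d x.
Proof. by move: rH => /andP[_ /forallP/(_ x) /eqP]. Qed.

Lemma real_D y : #|[set e in H | y \in e]| <= maxdeg d.
Proof. by rewrite real_deg; apply: leq_bigmax. Qed.

Lemma real_card : #|H| = m.
Proof.
have : \sum_x d x = #|H| * q.+1.
  rewrite (eq_bigr (fun x => \sum_(e in H) (x \in e : nat))); last first.
    by move=> x _; rewrite -real_deg card_sep_sum.
  rewrite exchange_big /= -sum1_card big_distrl /=; apply: eq_bigr => e eH.
  rewrite mul1n -(real_unif eH) -sum1_card [in RHS]big_mkcond /=.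
  by apply: eq_bigr => x _; case: (x \in e).
rewrite hsum mulnC => /eqP; rewrite eqn_pmul2r // => /eqP //.
Qed.

Lemma real_N : m * q.+1`! <= #|Oset q H|.
Proof. by rewrite -real_card; apply: card_Oset_ge; apply: real_unif. Qed.

Lemma real_valid : (m * q.+1`!) ^ q <= 2 * #|valid v H|.
Proof.
have hN := real_N.
set N := #|Oset q H| in hN *.
apply: leq_trans (valid_ge hq v (real_unif) (real_D) _ _).
- by rewrite leq_exp2r.
- apply: leq_trans hN; rewrite factS.
  have -> : 8 * q * q.+1 * q.+1 * (maxdeg d * q`!) = (8 * q.+1 ^ 2 * maxdeg d) * (q * q`!).
    by rewrite expnS expn1; ring.
  by apply: leq_mul hD1 _; rewrite leq_mul2r leqnSn orbT.
- apply: (@leq_trans ((m * q.+1`!) ^ q)); last by rewrite leq_exp2r.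
  rewrite factS !expnMn.
  set X := maxdeg d ^ q.+1; rewrite [q`! ^ q.+1]expnS; set Y := q`! ^ q.
  have e8 : 8 <= 8 ^ q by case: q hq => // q' _; rewrite expnS leq_pmulr // expn_gt0.
  have hf := fact_le q; rewrite factS in hf.
  have -> : 8 * (q.+1 * (X * (q`! * Y))) = (8 * X) * (q.+1 * q`!) * Y by ring.
  have -> : m ^ q * (q.+1 ^ q * Y) = m ^ q * q.+1 ^ q * Y by ring.
  rewrite leq_mul2r; apply/orP; right; apply: leq_mul => //.
  by apply: leq_trans hD2; rewrite leq_mul2r e8 orbT.
Qed.

End R.

Notation W := {ffun 'I_q -> {ffun 'I_q.+1 -> 'I_n}}.
Definition Aset := [set H : {set {set 'I_n}} | realizes q.+1 d H && (Kset v \in H)].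
Definition Bset := [set H : {set {set 'I_n}} | realizes q.+1 d H && (Kset v \notin H)].
Definition Back (H : {set {set 'I_n}}) := [set w : W | [forall i, col w i \in Cset q H (v i)]].

Lemma DK_v : DK d (Kset v) = \prod_i d (v i).
Proof. by rewrite /DK /Kset /imf big_imset //=; move=> i j _ _; apply: vinj. Qed.

Lemma Back_bound H : realizes q.+1 d H -> #|Back H| <= DK d (Kset v) * q`! ^ q.+1.
Proof.
move=> rH.
pose tr (w : W) : {ffun 'I_q.+1 -> {ffun 'I_q -> 'I_n}} := [ffun i => col w i].
have trI : injective tr.
  move=> w1 w2 E; apply/ffunP => j; apply/ffunP => i.
  have := congr1 (fun t : {ffun 'I_q.+1 -> {ffun 'I_q -> 'I_n}} => t i j) E.
  by rewrite /tr !ffunE.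
rewrite -(card_imset _ trI).
apply: (@leq_trans #|[set t : {ffun 'I_q.+1 -> {ffun 'I_q -> 'I_n}} | [forall i, t i \in Cset q H (v i)]]|).
  apply: subset_leq_card; apply/subsetP => t /imsetP[w]; rewrite !inE => /forallP h ->.
  by apply/forallP => i; rewrite /tr ffunE h.
rewrite card_fam DK_v -[X in _ ^ X](card_ord q.+1) -prod_nat_const -big_split /=.
apply: leq_prod => i _; apply: leq_trans (card_Cset _ (real_unif rH)) _.
by rewrite real_deg.
Qed.

Lemma ind_sum (T : finType) (A : {set T}) : \sum_t (t \in A : nat) = #|A|.
Proof. by rewrite -sum1_card [RHS]big_mkcond /=; apply: eq_bigr => t _; case: (t \in A). Qed.

Lemma core : #|Aset| * (m * q.+1) ^ q <= 2 * q`! * DK d (Kset v) * #|[set H | realizes q.+1 d H]|.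
Proof.
set G := [set p : {set {set 'I_n}} * W | (p.1 \in Aset) && (p.2 \in valid v p.1)].
have cG : #|G| = \sum_H (H \in Aset) * #|valid v H|.
  rewrite /G (card_pairs (fun (H : {set {set 'I_n}}) (w : W) => (H \in Aset) && (w \in valid v H))); apply: eq_bigr => H _.
  case: (boolP (H \in Aset)) => HA; rewrite ?mul1n ?mul0n.
    by apply: eq_card => w; rewrite !inE.
  by rewrite (eq_card (B := set0)) ?cards0 // => w; rewrite !inE.
have lo : #|Aset| * (m * q.+1`!) ^ q <= 2 * #|G|.
  rewrite cG big_distrr /= -ind_sum big_distrl /=; apply: leq_sum => H _.
  case: (boolP (H \in Aset)) => HA; rewrite ?mul0n // mul1n mul1n.
  by apply: real_valid; move: HA; rewrite inE => /andP[].
pose phi (p : {set {set 'I_n}} * W) := (sw v p.1 p.2, p.2).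
have phiI : {in G &, injective phi}.
  move=> [H1 w1] [H2 w2]; rewrite /G in_set /= => /andP[A1 v1].
  rewrite in_set /= => /andP[A2 v2].
  move: A1 A2; rewrite /Aset !in_set => /andP[_ K1] /andP[_ K2].
  rewrite /phi /= => -[E ew]; rewrite -ew in v2 E *.
  by rewrite (sw_inv K1 v1) (sw_inv K2 v2) E.
set G' := [set p : {set {set 'I_n}} * W | (p.1 \in Bset) && (p.2 \in Back p.1)].
have sub : phi @: G \subset G'.
  apply/subsetP => p' /imsetP[[H w]]; rewrite /G in_set /= => /andP[HA wv] ->.
  move: HA; rewrite /Aset in_set => /andP[rH KH].
  rewrite /G' in_set /phi /= /Bset in_set (K_notin_sw hq wv) andbT; apply/andP; split.
    apply/andP; split.
      apply/forall_inP => e /(sw_unif wv (real_unif rH)) ->; exact: eqxx.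
    by apply/forallP => x; rewrite /hdeg (sw_deg vinj KH wv) real_deg.
    by rewrite /Back in_set; apply/forallP => i; apply: col_Cset.
have up : #|G| <= #|Bset| * (DK d (Kset v) * q`! ^ q.+1).
  rewrite -(card_in_imset phiI); apply: leq_trans (subset_leq_card sub) _.
  rewrite /G' (card_pairs (fun (H : {set {set 'I_n}}) (w : W) => (H \in Bset) && (w \in Back H))) -ind_sum big_distrl /=; apply: leq_sum => H _.
  case: (boolP (H \in Bset)) => HB; rewrite ?mul0n ?mul1n.
    rewrite (eq_card (B := Back H)); last by move=> w; rewrite !inE.
    by apply: Back_bound; move: HB; rewrite inE => /andP[].
  by rewrite (eq_card (B := set0)) ?cards0 // => w; rewrite !inE.
have BT : #|Bset| <= #|[set H | realizes q.+1 d H]|.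
  by apply: subset_leq_card; apply/subsetP => H; rewrite !inE => /andP[].
have := leq_trans lo (leq_mul (leqnn 2) (leq_trans up (leq_mul BT (leqnn _)))).
rewrite factS mulnA expnMn expnS.
set P := q`! ^ q; set Y := #|[set H | realizes q.+1 d H]|.
have -> : 2 * (Y * (DK d (Kset v) * (q`! * P))) = (2 * q`! * DK d (Kset v) * Y) * P by ring.
by rewrite mulnA leq_pmul2r // expn_gt0 fact_gt0.
Qed.

End Main.

Unset Implicit Arguments. Set Strict Implicit. Set Printing Implicit Defensive.
From mathcomp Require Import all_algebra.
From mathcomp Require Import all_classical all_reals all_analysis.
Import Order.TTheory GRing.Theory Num.Theory.
Local Open Scope ring_scope.

Lemma hyp_nat (R : realType) (q m D : nat) : (1 <= q)%N ->
  (((q.+1 ^ 2)%N%:R + D%:R `^ (q%:R^-1)) * D%:R <= (m%:R / 8 : R)) ->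
  (8 * q.+1 ^ 2 * D <= m)%N /\ (8 ^ q * D ^ q.+1 <= m ^ q)%N.
Proof.
move=> hq h.
set x := D%:R `^ (q%:R^-1) in h.
have x0 : 0 <= x by apply: powR_ge0.
have D0 : (0 : R) <= D%:R by [].
have h8 : (0 : R) < 8 by [].
rewrite mulrDl in h.
split.
  rewrite -(ler_nat R) !natrM.
  have : (q.+1 ^ 2)%N%:R * D%:R <= (m%:R / 8 : R).
    apply: le_trans h; rewrite lerDl; exact: mulr_ge0.
  rewrite ler_pdivlMr // => h1.
  apply: le_trans h1; rewrite le_eqVlt; apply/orP; left; apply/eqP. ring.
have h2 : x * D%:R <= (m%:R / 8 : R).
  apply: le_trans h; rewrite lerDr; apply: mulr_ge0 => //.
have xq : x ^+ q = D%:R.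
  rewrite -powR_mulrn // /x -powRrM mulVf ?powRr1 //.
  by rewrite pnatr_eq0 -lt0n.
have h3 : (x * D%:R) ^+ q <= (m%:R / 8 : R) ^+ q.
  by apply: lerXn2r; rewrite ?nnegrE //; apply: mulr_ge0.
rewrite exprMn xq exprMn exprVn ler_pdivlMr ?exprn_gt0 // in h3.
rewrite -(ler_nat R) !natrM !natrX exprS.
by move: h3; rewrite mulrC mulrA.
Qed.

Theorem lemma2p3 (R : realType) (q n m : nat) (d : 'I_n -> nat) :
  (1 <= q)%N ->
  graphical q.+1 d ->
  (\sum_(v : 'I_n) d v)%N = (q.+1 * m)%N ->
  ((((q.+1) ^ 2)%N%:R + (maxdeg d)%:R `^ (q%:R^-1)) * (maxdeg d)%:R
     <= (m%:R / 8 : R)) ->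
  forall K : {set 'I_n}, #|K| = q.+1 ->
  PK R q.+1 d K <= 2 * (q`!)%:R * (DK d K)%:R / ((m * q.+1)%N%:R ^+ q).
Proof.
move=> hq _ hsum h K HK.
have [hD1 hD2] := @hyp_nat R _ _ _ hq h.
pose v (i : 'I_q.+1) : 'I_n := enum_val (cast_ord (esym HK) i).
have vinj : injective v by move=> i j /enum_val_inj /cast_ord_inj.
have Kv : Kset v = K.
  apply/eqP; rewrite eqEcard card_imf // card_ord HK leqnn andbT.
  apply/fintype.subsetP => x /imfP[i ->]; exact: enum_valP.
have c := core hq vinj hsum hD1 hD2.
rewrite /Aset Kv in c.
rewrite /PK.
set a := #|[set H | realizes q.+1 d H && (K \in H)]| in c *.
set T := #|[set H | realizes q.+1 d H]| in c *.
have rge0 : 0 <= 2 * (q`!)%:R * (DK d K)%:R / ((m * q.+1)%N%:R ^+ q) :> R.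
  by apply: divr_ge0; [apply: mulr_ge0 | apply: exprn_ge0].
case: (posnP a) => [a0|apos].
  by rewrite a0 mul0r.
have [H0] : exists H0, H0 \in [set H | realizes q.+1 d H && (K \in H)].
  by apply/set0Pn; rewrite -card_gt0.
rewrite inE => /andP[rH KH].
have Tpos : (0 < T)%N.
  rewrite card_gt0; apply/set0Pn; exists H0; by rewrite inE.
have mpos : (0 < m)%N.
  have i0 : 'I_q.+1 := ord0.
  have : (0 < d (v i0))%N.
    rewrite -(real_deg rH) card_gt0; apply/set0Pn; exists K.
    by rewrite inE KH -Kv imf_f.
  move=> dpos; case: (posnP m) => // m0.
  move: hsum; rewrite m0 muln0 => /eqP; rewrite sum_nat_eq0 => /forallP/(_ (v i0)).
  by rewrite /= -[d (v i0) == 0%N]negbK -lt0n dpos.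
rewrite ler_pdivrMr ?ltr0n // mulrAC ler_pdivlMr; last by rewrite exprn_gt0 // ltr0n muln_gt0 mpos.
rewrite -natrX -!natrM ler_nat.
exact: c.
Qed.
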